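(* Let $k\ge 2$, $X_1,\dots,X_k\in\mathcal{M}_d$ and $S\subseteq\{1,\dots,k\}$. For $i\in\{1,\dots,k\}$ put $X_i'=X_i^T$ if $i\in S$ and $X_i'=X_i$ if $i\notin S$, and put $Y_i=X_i$ if $i\in S$ and $Y_i=X_i^T$ if $i\notin S$. Then $$\operatorname{tr}_{\{1,\dots,k\}\setminus\{k\}}\big[(k\,k\!-\!1\cdots1)^{T_S}(X_1\otimes\cdots\otimes X_k)\big]=\begin{cases}X_1'X_2'\cdots X_{k-1}'X_k & k\notin S,\\ Y_{k-1}Y_{k-2}\cdots Y_1X_k & k\in S.\end{cases}$$
   Context: $\mathcal{M}_d$ denotes complex $d\times d$ matrices. A permutation $\sigma\in S_k$ acts on $(\mathbb{C}^d)^{\otimes k}$ by $\sigma|v_1\rangle\otimes\cdots\otimes|v_k\rangle=|v_{\sigma^{-1}(1)}\rangle\otimes\cdots\otimes|v_{\sigma^{-1}(k)}\rangle$, extended linearly; $(k\,k\!-\!1\cdots1)$ is the cycle $k\to k-1\to\cdots\to1\to k$. $T_S$ is the partial transpose (with respect to a fixed orthonormal basis) on all tensor factors in $S$, and $X^T$ is the transpose in that basis. $\operatorname{tr}_{\{1,\dots,k\}\setminus\{k\}}$ is the partial trace over all tensor factors except the $k$-th. *)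

(* Defs.v *)
From HB Require Import structures.
From mathcomp Require Import all_boot all_order all_algebra all_fingroup.
Set Implicit Arguments. Unset Strict Implicit. Unset Printing Implicit Defensive.
Import GRing.Theory.
Local Open Scope ring_scope.

(* Operators on (R^d)^{(x)k}, given by their matrix entries in the product
   basis |e_{i 0}> (x) ... (x) |e_{i (k-1)}>, indexed by multi-indices
   i : 'I_k -> 'I_d (tensor factors are numbered 0..k-1 instead of 1..k). *)
Definition midx (k d : nat) := {ffun 'I_k -> 'I_d}.
Definition tensor_op (R : Type) (k d : nat) := midx k d -> midx k d -> R.

Definition tensor_mx (R : comNzRingType) (k d : nat) (X : 'I_k -> 'M[R]_d)
  : tensor_op R k d :=
  fun i j => \prod_(m < k) X m (i m) (j m).

(* the operator of a permutation s:
   s |v_1> (x) ... (x) |v_k> = |v_{s^-1 1}> (x) ... (x) |v_{s^-1 k}>,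
   so s |e_j> = |e_{j o s^-1}>, i.e. entry (i,j) is [i = j o s^-1]. *)
Definition perm_op (R : comNzRingType) (k d : nat) (s : {perm 'I_k})
  : tensor_op R k d :=
  fun i j => ([forall m, i m == j ((s^-1)%g m)])%:R.

(* the cycle (k k-1 ... 1): k -> k-1 -> ... -> 1 -> k; with 0-based indices
   m -> m-1 (mod k). *)
Definition cycle_down (k : nat) : {perm 'I_k} := perm (@ord_pred_inj k).

Definition ptrans (R : Type) (k d : nat) (S : {set 'I_k}) (A : tensor_op R k d)
  : tensor_op R k d :=
  fun i j => A [ffun m => if m \in S then j m else i m]
               [ffun m => if m \in S then i m else j m].

Definition ptrace_keep (R : comNzRingType) (k d : nat) (l : 'I_k)
  (A : tensor_op R k d) : 'M[R]_d :=
  \matrix_(a, b) \sum_(i : midx k d) \sum_(j : midx k d)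
     ([forall m, if m == l then (i m == a) && (j m == b) else i m == j m])%:R
       * A i j.

Lemma last_subproof (k : nat) : (1 < k)%N -> (k.-1 < k)%N.
Proof. by case: k. Qed.

(* the last tensor factor (factor k, 0-based index k-1) *)
Definition klast (k : nat) (hk : (1 < k)%N) : 'I_k := Ordinal (last_subproof hk).

Definition op_mul (R : comNzRingType) (k d : nat) (A B : tensor_op R k d)
  : tensor_op R k d :=
  fun i j => \sum_(l : midx k d) A i l * B l j.

(* Main.v *)
Require Import Defs.
From HB Require Import structures.
From mathcomp Require Import all_boot all_order all_algebra all_fingroup.
Import GRing.Theory.
Local Open Scope ring_scope.
Set Implicit Arguments. Unset Strict Implicit.

Section Aux.
Variables (R : comNzRingType) (d : nat).

Lemma sum_delta (T : finType) (x0 : T) (F : T -> R) :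
  \sum_x (x == x0)%:R * F x = F x0.
Proof.
rewrite (bigD1 x0) //= eqxx mul1r big1 ?addr0 // => x /negbTE ->.
by rewrite mul0r.
Qed.

Lemma ffun1_sum (F : {ffun 'I_1 -> 'I_d} -> R) :
  \sum_c F c = \sum_x F [ffun _ => x].
Proof.
rewrite (reindex (fun x : 'I_d => [ffun _ : 'I_1 => x])) //=.
apply: onW_bij; exists (fun c : {ffun 'I_1 -> 'I_d} => c ord0).
  by move=> x; rewrite ffunE.
by move=> c; apply/ffunP => i; rewrite ffunE; case: i => [[|//] ?]; congr (c _); apply: val_inj.
Qed.

Definition ext n (g : {ffun 'I_n -> 'I_d}) (x : 'I_d) : {ffun 'I_n.+1 -> 'I_d} :=
  [ffun i : 'I_n.+1 => if (insub (val i) : option 'I_n) is Some j then g j else x].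

Lemma ext_lt n g x (i : 'I_n.+1) (j : 'I_n) : val i = val j -> ext g x i = g j.
Proof. by move=> e; rewrite ffunE e valK. Qed.

Arguments ext_lt {n g x i j}.

Lemma ext_ge n g x (i : 'I_n.+1) : val i = n -> ext g x i = x.
Proof. by move=> e; rewrite ffunE e insubN // ltnn. Qed.

Arguments ext_ge {n g x i}.

Lemma ffunS_sum n (F : {ffun 'I_n.+1 -> 'I_d} -> R) :
  \sum_c F c = \sum_(g : {ffun 'I_n -> 'I_d}) \sum_x F (ext g x).
Proof.
rewrite pair_big /=.
rewrite (reindex (fun p : {ffun 'I_n -> 'I_d} * 'I_d => ext p.1 p.2)) //=.
apply: onW_bij.
exists (fun c : {ffun 'I_n.+1 -> 'I_d} =>
   ([ffun j : 'I_n => c (widen_ord (leqnSn n) j)], c ord_max)).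
  move=> [g x] /=; congr pair; last exact: ext_ge.
  by apply/ffunP => j; rewrite ffunE (ext_lt (j := j)).
move=> c; apply/ffunP => i /=.
case: (ltnP i n) => hi.
  by rewrite (ext_lt (j := Ordinal hi)) // ffunE; congr (c _); apply: val_inj.
have ei : val i = n by apply/eqP; rewrite eqn_leq hi -ltnS ltn_ord.
by rewrite ext_ge //; congr (c _); apply: val_inj.
Qed.

Lemma path_lemma L (M : 'I_L -> 'M[R]_d) a e :
  (\prod_(m < L) M m) a e =
  \sum_(c : {ffun 'I_L.+1 -> 'I_d})
     ((c ord0 == a) && (c ord_max == e))%:R *
     \prod_(m < L) M m (c (widen_ord (leqnSn L) m)) (c (lift ord0 m)).
Proof.
elim: L M a e => [|L IH] M a e.
  rewrite big_ord0 ffun1_sum.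
  under eq_bigr => x _ do rewrite big_ord0 mulr1 !ffunE -mulnb natrM.
  by rewrite sum_delta /= mxE.
have -> : \prod_(i < L.+1) M i = (\prod_(i < L) M (widen_ord (leqnSn L) i)) * M ord_max by rewrite big_ord_recr.
rewrite [LHS]mxE.
have IH' := fun y => IH (fun i => M (widen_ord (leqnSn L) i)) a y.
cbv beta in IH'.
under eq_bigr => y _ do rewrite IH'.
rewrite ffunS_sum.
under eq_bigr => y _ do rewrite mulr_suml.
rewrite exchange_big /=; apply: eq_bigr => g _.
transitivity ((g ord0 == a)%:R *
   ((\prod_(m < L) M (widen_ord (leqnSn L) m) (g (widen_ord (leqnSn L) m)) (g (lift ord0 m))) * M ord_max (g ord_max) e)).
  under eq_bigr => y _ do rewrite -mulnb natrM (eq_sym _ y) -!mulrA mulrCA.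
  by rewrite sum_delta.
have e0 : ext g e ord0 = g ord0 by apply: ext_lt.
symmetry.
under eq_bigr => x _ do rewrite (ext_lt (j := ord0)) // (ext_ge (i := ord_max)) //.
under eq_bigr => x _ do rewrite big_ord_recr /= -mulnb natrM -!mulrA mulrCA.
rewrite sum_delta; congr (_ * _).
rewrite (ext_lt (i := widen_ord _ ord_max) (j := ord_max)) //.
rewrite (ext_ge (i := lift ord0 ord_max)) //.
congr (_ * _); apply: eq_bigr => m _.
rewrite (ext_lt (j := widen_ord (leqnSn L) m)) //.
by rewrite (ext_lt (i := lift ord0 _) (j := lift ord0 m)).
Qed.


Lemma trace_collapse n (l : 'I_n) a b (A : tensor_op R n d) (i : midx n d) :
  \sum_(j : midx n d) ([forall m, if m == l then (i m == a) && (j m == b) else i m == j m])%:R * A i j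
  = (i l == a)%:R * A i [ffun m => if m == l then b else i m].
Proof.
rewrite (bigD1 [ffun m => if m == l then b else i m]) //= big1 ?addr0.
  congr (_%:R * _); congr (nat_of_bool _); apply/idP/idP => [/forallP H | H].
    by have := H l; rewrite eqxx => /andP[].
  apply/forallP => m; by rewrite ffunE; case: eqP => [->|]; rewrite ?H ?eqxx.
move=> j nj; suff -> : [forall m, if m == l then (i m == a) && (j m == b) else i m == j m] = false.
  by rewrite mul0r.
apply/negbTE/forallP => H; move/eqP: nj; apply; apply/ffunP => m; rewrite ffunE.
by have := H m; case: eqP => [->|_]; [case/andP => _ /eqP | move/eqP].
Qed.

Definition mixS n (S : {set 'I_n}) (x y : midx n d) : midx n d :=
  [ffun m => if m \in S then y m else x m].

Definition sigma n (S : {set 'I_n}) (p : midx n d * midx n d) :=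
  (mixS S p.1 p.2, mixS S p.2 p.1).
Arguments sigma : simpl never.

Lemma sigmaK n S : involutive (@sigma n S).
Proof.
move=> [x y]; rewrite /sigma /=; congr pair; apply/ffunP => m; rewrite !ffunE;
  by case: (m \in S).
Qed.

Lemma ptrans_sigma n S (A : tensor_op R n d) p :
  ptrans S A (sigma S p).1 (sigma S p).2 = A p.1 p.2.
Proof.
rewrite /ptrans /sigma /=; congr A; apply/ffunP => m; rewrite !ffunE;
  by case: (m \in S).
Qed.

Lemma inv_cycle n (m : 'I_n) : ((cycle_down n)^-1)%g m = ordS m.
Proof.
apply: (@perm_inj _ (cycle_down n)); rewrite permKV /cycle_down permE.
by rewrite ordSK.
Qed.

Lemma perm_cycle_eq n (u v : midx n d) :
  perm_op R (cycle_down n) u v = (u == [ffun m => v (ordS m)])%:R.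
Proof.
rewrite /perm_op; congr (_%:R); congr (nat_of_bool _); apply/forallP/eqP => [H|-> m].
  by apply/ffunP => m; rewrite ffunE -inv_cycle; apply/eqP.
by rewrite ffunE inv_cycle.
Qed.

Lemma pair_delta n (h : midx n d -> midx n d) (F : midx n d * midx n d -> R) :
  \sum_(p : midx n d * midx n d) (p.1 == h p.2)%:R * F p = \sum_v F (h v, v).
Proof.
transitivity (\sum_(u : midx n d) \sum_(v : midx n d) (u == h v)%:R * F (u, v)).
  by rewrite pair_big; apply: eq_bigr => [[u v]] _.
rewrite exchange_big; apply: eq_bigr => v _; exact: sum_delta.
Qed.

Lemma prod_rev_tr (I : eqType) (r : seq I) (P : pred I) (F : I -> 'M[R]_d) :
  \prod_(i <- rev r | P i) (F i)^T = (\prod_(i <- r | P i) F i)^T.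
Proof.
elim: r => [|x r IH]; first by rewrite !big_nil; apply/esym/trmx1.
rewrite rev_cons big_rcons big_cons IH; case: (P x) => //=.
  by rewrite trmx_mul.
by rewrite mulr1.
Qed.

Lemma bigmul_prod (I : Type) (r : seq I) (P : pred I) (F : I -> 'M[R]_d) :
  \big[mulmx/1%:M]_(i <- r | P i) F i = \prod_(i <- r | P i) F i.
Proof. by []. Qed.

Lemma prod_lastfilter n (F : 'I_n.+1 -> 'M[R]_d) :
  \prod_(i < n.+1 | i != ord_max) F i = \prod_(i < n) F (widen_ord (leqnSn n) i).
Proof.
rewrite big_mkcond big_ord_recr /= eqxx mulr1; apply: eq_bigr => i _.
suff -> : (widen_ord (leqnSn n) i != ord_max) by [].
by rewrite -(inj_eq val_inj) /= ltn_eqF.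
Qed.


Lemma collapse n (W : {ffun 'I_n -> 'I_d} -> R) (f g : {ffun 'I_n -> 'I_d} -> 'I_d)
   (x0 : 'I_d) (N : 'M[R]_d) b :
  \sum_e (\sum_c ((f c == x0) && (g c == e))%:R * W c) * N e b
  = \sum_c (f c == x0)%:R * (W c * N (g c) b).
Proof.
under eq_bigr => e _ do rewrite mulr_suml.
rewrite exchange_big; apply: eq_bigr => c _.
under eq_bigr => e _ do rewrite -mulnb natrM (eq_sym (g c) e) -!mulrA mulrCA.
by rewrite sum_delta.
Qed.


Lemma collapse' n (W : {ffun 'I_n -> 'I_d} -> R) (f g : {ffun 'I_n -> 'I_d} -> 'I_d)
   (x0 : 'I_d) (N : 'M[R]_d) b :
  \sum_e (\sum_c ((g c == e) && (f c == x0))%:R * W c) * N e b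
  = \sum_c (f c == x0)%:R * (W c * N (g c) b).
Proof.
rewrite -collapse; apply: eq_bigr => e _; congr (_ * _); apply: eq_bigr => c _.
by rewrite andbC.
Qed.

End Aux.

Theorem proposition4 (R : comNzRingType) (d k : nat) (hk : (1 < k)%N)
  (X : 'I_k -> 'M[R]_d) (S : {set 'I_k}) :
  let X' := fun i => if i \in S then (X i)^T else X i in
  let Y := fun i => if i \in S then X i else (X i)^T in
  ptrace_keep (klast hk)
    (op_mul (ptrans S (@perm_op R k d (cycle_down k))) (tensor_mx X)) =
  if klast hk \notin S then
    (\big[mulmx/1%:M]_(i < k | i != klast hk) X' i) *m X (klast hk)
  else
    (\big[mulmx/1%:M]_(i <- rev (enum 'I_k) | i != klast hk) Y i)
      *m X (klast hk).
Proof.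
cbv zeta beta.
case: k hk X S => [//|L] hk X S.
have -> : klast hk = ord_max by apply: val_inj.
rewrite !bigmul_prod.
apply/matrixP => a b.
rewrite /ptrace_keep [LHS]mxE.
rewrite (eq_bigr _ (fun i _ => trace_collapse ord_max a b (op_mul (ptrans S (perm_op R (cycle_down L.+1))) (tensor_mx X)) i)).
rewrite /op_mul.
under eq_bigr => i _ do rewrite mulr_sumr.
rewrite pair_big /=.
rewrite (reindex_inj (h := sigma S) (inv_inj (@sigmaK _ _ S))) /=.
under eq_bigr => p _ do rewrite ptrans_sigma perm_cycle_eq mulrCA.
rewrite (pair_delta (fun v => [ffun m => v (ordS m)]) (fun p => (mixS S p.1 p.2 ord_max == a)%:R * tensor_mx X (mixS S p.2 p.1) [ffun m => if m == ord_max then b else mixS S p.1 p.2 m])) /=.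
have h1 : forall v : midx L.+1 d, mixS S [ffun m => v (ordS m)] v ord_max = if ord_max \in S then v ord_max else v ord0.
  move=> v; rewrite !ffunE; case: (_ \in S) => //; congr (v _); apply: val_inj; by rewrite /= modnn.
have h2 : forall v : midx L.+1 d, tensor_mx X (mixS S v [ffun m => v (ordS m)])
   [ffun m => if m == ord_max then b else mixS S [ffun m => v (ordS m)] v m] =
   (\prod_(m < L) (if widen_ord (leqnSn L) m \in S then (X (widen_ord (leqnSn L) m))^T else X (widen_ord (leqnSn L) m)) (v (widen_ord (leqnSn L) m)) (v (lift ord0 m)))
   * X ord_max (if ord_max \in S then v ord0 else v ord_max) b.
  move=> v; rewrite /tensor_mx big_ord_recr /=; congr (_ * _).
    apply: eq_bigr => m _.
    have hm : (widen_ord (leqnSn L) m == ord_max) = false.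
      by rewrite -(inj_eq val_inj) /= ltn_eqF.
    have ho : ordS (widen_ord (leqnSn L) m) = lift ord0 m.
      by apply: val_inj; rewrite /= modn_small // ltnS ltn_ord.
    by rewrite !ffunE hm ho; case: (_ \in S); rewrite ?mxE.
  have ho2 : ordS (ord_max : 'I_L.+1) = ord0 by apply: val_inj; rewrite /= modnn.
  by rewrite /mixS /= !ffunE eqxx /= ho2; case: (_ \in S).
under eq_bigr => v _ do rewrite h1 h2.
have PL := fun e f => path_lemma (fun m : 'I_L => if widen_ord (leqnSn L) m \in S then (X (widen_ord (leqnSn L) m))^T else X (widen_ord (leqnSn L) m)) e f.
cbv beta in PL.
case hS: (ord_max \in S) => /=.
  rewrite (eq_bigr (fun i => (if i \in S then (X i)^T else X i)^T)); last first.
    by move=> i _; case: (i \in S); rewrite ?trmxK.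
  rewrite prod_rev_tr.
  have -> : \prod_(i <- enum 'I_L.+1 | i != ord_max) (if i \in S then (X i)^T else X i)
     = \prod_(i < L.+1 | i != ord_max) (if i \in S then (X i)^T else X i).
    by rewrite enumT [index_enum _]unlock.
  have -> : \prod_(i < L.+1 | i != ord_max) (if i \in S then (X i)^T else X i) = \prod_(i<L) (if widen_ord (leqnSn L) i \in S then (X (widen_ord (leqnSn L) i))^T else X (widen_ord (leqnSn L) i)) by rewrite prod_lastfilter.
  rewrite [RHS]mxE.
  under [RHS]eq_bigr => e _ do rewrite mxE PL.
  by rewrite collapse'.
have -> : \prod_(i < L.+1 | i != ord_max) (if i \in S then (X i)^T else X i) = \prod_(i<L) (if widen_ord (leqnSn L) i \in S then (X (widen_ord (leqnSn L) i))^T else X (widen_ord (leqnSn L) i)) by rewrite prod_lastfilter.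
rewrite [RHS]mxE.
under [RHS]eq_bigr => e _ do rewrite PL.
by rewrite collapse.
Qed.
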